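(* Let $n\ge1$ and $I,J\subseteq[n-1]$, complements taken in $[n-1]$. Then (a) $L_{\mathrm{comp}(I)}=\sum_{J\subseteq[n-1]}(-1)^{|J\setminus I|}(\nu-1)^{|I\cap J|}\Pi(\nu)_{\mathrm{comp}(J)}$; (b) $\Pi(\nu)_{\mathrm{comp}(J)}=\sum_{I\subseteq[n-1]}\frac{1}{\nu^{n-1}}(-1)^{|J\setminus I|}(\nu-1)^{|(I\cup J)^c|}L_{\mathrm{comp}(I)}$.
   Context: Fix an integer $\nu>1$; $C_\nu$ is the additive cyclic group of order $\nu$; $Q_n(\nu)=\bigoplus_{i\in[n-1]}C_\nu$. $\psi_\nu(0)=1$, $\psi_\nu(g)=-1/(\nu-1)$ for $g\ne0$. For $I\subseteq[n-1]$, $\dot\chi^I(\nu)(\mathbf g)=\prod_{i\in[n-1]\setminus I}\psi_\nu(g_i)$, and $\kappa_I(\nu)$ is the indicator function of $\{\mathbf g\in Q_n(\nu):\{i:g_i\ne0\}=I\}$. $\mathrm{scf}(\mathcal N_n(\nu))$ is the span of the $\kappa_I(\nu)$, which also has basis $\{\dot\chi^I(\nu)\}$. $\mathrm{comp}(\{s_1<\dots<s_i\})=(s_1,s_2-s_1,\dots,n-s_i)$; $L_{\mathrm{comp}(I)}=\sum_{I\subseteq J\subseteq[n-1]}M_{\mathrm{comp}(J)}$ is the fundamental quasisymmetric function ($M$ the monomial ones). $\mathrm{ch}^n_\nu:\mathrm{scf}(\mathcal N_n(\nu))\to\mathsf{QSym}_n$ is the linear isomorphism $\dot\chi^I(\nu)\mapsto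 L_{\mathrm{comp}(I)}$, and $\Pi(\nu)_{\mathrm{comp}(I)}:=\mathrm{ch}^n_\nu\big(\kappa_I(\nu)/(\nu-1)^{|I|}\big)$. *)

(* Defs.v *)
From HB Require Import structures.
From mathcomp Require Import all_boot all_order all_algebra.
Set Implicit Arguments. Unset Strict Implicit. Unset Printing Implicit Defensive.
Import Order.TTheory GRing.Theory Num.Theory.
Local Open Scope ring_scope.

(* [n-1] = {1,...,n-1} is modelled by 'I_(n-1) (positions 0..n-2, shifted by one).
   Subsets I of [n-1] are {set 'I_(n-1)}; comp is a bijection from such subsets to
   compositions of n, so we index QSym_n-objects by the subset I rather than comp(I). *)

(* Q_n(nu) = (+)_{i in [n-1]} C_nu ; 'Z_nu is Z/nu for nu >= 2. *)
Definition Qn (n nu : nat) := {ffun 'I_(n.-1) -> 'Z_nu}.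

(* QSym_n, represented by its coordinates in the monomial basis
   {M_comp(J) : J subset of [n-1]}. *)
Definition QSym (R : numFieldType) (n : nat) := {ffun {set 'I_(n.-1)} -> R^o}.

Definition Mq (R : numFieldType) (n : nat) (J : {set 'I_(n.-1)}) : QSym R n :=
  [ffun K => (K == J)%:R].

Definition Lq (R : numFieldType) (n : nat) (I : {set 'I_(n.-1)}) : QSym R n :=
  \sum_(J : {set 'I_(n.-1)} | I \subset J) Mq R J.

Definition psi (R : numFieldType) (nu : nat) (g : 'Z_nu) : R :=
  if g == 0 then 1 else - (nu%:R - 1)^-1.

Definition chid (R : numFieldType) (n nu : nat) (I : {set 'I_(n.-1)}) : {ffun Qn n nu -> R^o} :=
  [ffun g : Qn n nu => \prod_(i in ~: I) psi R (g i)].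

Definition kappa (R : numFieldType) (n nu : nat) (I : {set 'I_(n.-1)}) : {ffun Qn n nu -> R^o} :=
  [ffun g : Qn n nu => ([set i | g i != 0] == I)%:R].

Definition Pi (R : numFieldType) (n nu : nat)
  (ch : {ffun Qn n nu -> R^o} -> QSym R n) (J : {set 'I_(n.-1)}) : QSym R n :=
  ch (((nu%:R - 1) ^+ #|J|)^-1 *: kappa R nu J).

(* Main.v *)
Require Import Defs.
From HB Require Import structures.
From mathcomp Require Import all_boot all_order all_algebra.
From mathcomp Require Import ring.
Import Order.TTheory GRing.Theory Num.Theory.
Local Open Scope ring_scope.

Lemma sum_set_prod (R : comPzRingType) (T : finType) (F : T -> bool -> R) :
  \sum_(A : {set T}) \prod_i F i (i \in A) = \prod_i (F i true + F i false).
Proof.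
have -> : \prod_i (F i true + F i false) = \prod_i \sum_(b : bool) F i b.
  by apply: eq_bigr => i _; rewrite big_bool.
rewrite bigA_distr_bigA /=.
rewrite (reindex (fun f : {ffun T -> bool} => [set x | f x])) /=.
  by apply: eq_bigr => f _; apply: eq_bigr => i _; rewrite inE.
exists (fun A : {set T} => [ffun x => x \in A]) => [f _|A _].
  by apply/ffunP => x; rewrite ffunE inE.
by apply/setP => x; rewrite inE ffunE.
Qed.

Lemma expr_card (R : comPzRingType) (T : finType) (A : {set T}) (c : R) :
  c ^+ #|A| = \prod_i (if i \in A then c else 1).
Proof. by rewrite -prodr_const big_mkcond. Qed.

Section Main.
Variables (R : numFieldType) (nu n : nat).
Hypothesis hnu : (1 < nu)%N.
Let q : R := nu%:R - 1.
Lemma qE : q = (nu.-1)%:R.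
Proof. by rewrite /q -(prednK (ltnW hnu)) mulrSr addrK. Qed.
Lemma q0 : q != 0.
Proof. by rewrite qE pnatr_eq0 -lt0n -ltnS prednK // ltnW. Qed.
Lemma nu0 : (nu%:R : R) != 0.
Proof. by rewrite pnatr_eq0 -lt0n ltnW. Qed.

Lemma scE (T : finType) (f : {ffun T -> R^o}) (a : R) x : (a *: f) x = a * f x.
Proof. by rewrite ffunE. Qed.

Lemma chid_kappa (I : {set 'I_(n.-1)}) :
  chid R nu I = \sum_(J : {set 'I_(n.-1)})
     ((-1) ^+ #|J :\: I| * q ^+ #|I :&: J|) *: ((q ^+ #|J|)^-1 *: kappa R nu J).
Proof.
apply/ffunP => g; rewrite sum_ffunE !ffunE.
set S := [set i | g i != 0].
rewrite (bigD1 S) //= [X in _ + X]big1 ?addr0; last first.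
  by move=> J /negbTE HJ; rewrite !scE !ffunE eq_sym HJ !mulr0.
rewrite !scE !ffunE eqxx mulr1.
have qa : q ^+ #|S :&: I| != 0 by rewrite expf_neq0 // q0.
rewrite -(cardsID I S) setIC exprD invfM mulrA -(mulrA _ (q ^+ _)) divff //.
rewrite mulr1 -exprVn -exprNn expr_card big_mkcond /=.
apply: eq_bigr => i _; rewrite !inE /psi /q.
by case: (i \in I); case: (g i == 0).
Qed.

Lemma kappa_chid (J : {set 'I_(n.-1)}) :
  (q ^+ #|J|)^-1 *: kappa R nu J = \sum_(I : {set 'I_(n.-1)})
     ((nu%:R ^+ n.-1)^-1 * (-1) ^+ #|J :\: I| * q ^+ #|~: (I :|: J)|) *: chid R nu I.
Proof.
apply/ffunP => g; rewrite sum_ffunE scE ffunE.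
set S := [set i | g i != 0].
pose F (i : 'I_(n.-1)) (b : bool) : R :=
  (nu%:R)^-1 * (if b then 1 else (if i \in J then -1 else q) * psi R (g i)).
have E : forall I : {set 'I_(n.-1)},
   (((nu%:R ^+ n.-1)^-1 * (-1) ^+ #|J :\: I| * q ^+ #|~: (I :|: J)|) *: chid R nu I) g
   = \prod_i F i (i \in I).
  move=> I; rewrite scE ffunE.
  have -> : (nu%:R ^+ n.-1)^-1 = \prod_(i : 'I_n.-1) (nu%:R : R)^-1.
    by rewrite prodr_const card_ord exprVn.
  rewrite !expr_card [X in _ * X]big_mkcond /= -!big_split /=.
  apply: eq_bigr => i _; rewrite /F !inE.
  by case: (i \in I); case: (i \in J); rewrite /= ?mulr1 ?mul1r ?mulrA.
rewrite (eq_bigr _ (fun I _ => E I)) sum_set_prod.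
have -> : (S == J)%:R = \prod_i ((i \in S) == (i \in J))%:R :> R.
  case: eqP => [->|neq]; first by rewrite big1 // => i _; rewrite eqxx.
  have [i Hi] : exists i, (i \in S) != (i \in J).
    apply/existsP; rewrite -negb_forall; apply/negP => /forallP H.
    by apply: neq; apply/setP => i; apply/eqP/H.
  by rewrite (bigD1 i) //= (negbTE Hi) mul0r.
rewrite -exprVn expr_card -big_split /=; apply: eq_bigr => i _; rewrite /F inE /psi.
have hq : (nu%:R - 1 : R) != 0 := q0. have hn := nu0.
case: (i \in J); case: (g i == 0) => /=; rewrite /q. all: field; by rewrite ?hq ?hn.
Qed.
End Main.

Theorem lemma4p3 (R : numFieldType) (nu n : nat) (hnu : (1 < nu)%N) (hn : (0 < n)%N)
  (ch : {linear {ffun Qn n nu -> R^o} -> QSym R n})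
  (hch : forall I : {set 'I_(n.-1)}, ch (chid R nu I) = Lq R I) :
  (forall I : {set 'I_(n.-1)},
     Lq R I = \sum_(J : {set 'I_(n.-1)})
                ((-1) ^+ #|J :\: I| * (nu%:R - 1) ^+ #|I :&: J|) *: Pi ch J)
  /\
  (forall J : {set 'I_(n.-1)},
     Pi ch J = \sum_(I : {set 'I_(n.-1)})
                ((nu%:R ^+ n.-1)^-1 * (-1) ^+ #|J :\: I|
                   * (nu%:R - 1) ^+ #|~: (I :|: J)|) *: Lq R I).
Proof.
split.
  move=> I; rewrite -hch (@chid_kappa R nu n hnu) linear_sum.
  by apply: eq_bigr => J _; rewrite linearZ.
move=> J; rewrite /Pi (@kappa_chid R nu n hnu) linear_sum.
by apply: eq_bigr => I _; rewrite linearZ hch.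
Qed.
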